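(* For each integer $k\geq2$, let $O_k=\langle x,e\mid x^k=x^{k-1}e=0,\ ex=x,\ e^2=e\rangle$. Then the pseudovariety $\llbracket O_k\rrbracket$ is not join irreducible.
   Context: All semigroups are finite; $O_k$ is the finite semigroup with zero $0$ given by the presentation. A pseudovariety is a class of finite semigroups closed under finite direct products, subsemigroups and homomorphic images; $\llbracket S\rrbracket$ is the pseudovariety generated by $S$. A pseudovariety $\mathbf{V}$ is join irreducible if for every set $\mathscr{X}$ of pseudovarieties, $\mathbf{V}\subseteq\bigvee\mathscr{X}$ implies $\mathbf{V}\subseteq\mathbf{X}$ for some $\mathbf{X}\in\mathscr{X}$. *)

(* Defs.v *)
From mathcomp Require Import all_boot.
From mathcomp Require Import zify.
Set Implicit Arguments. Unset Strict Implicit. Unset Printing Implicit Defensive.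

Record finSemigroup := FinSemigroup {
  sg_car :> finType;
  sg_op : sg_car -> sg_car -> sg_car;
  sg_assoc : associative sg_op;
  sg_nonempty : 0 < #|sg_car|
}.

Definition is_hom (S T : finSemigroup) (f : S -> T) : Prop :=
  forall x y : S, f (sg_op x y) = sg_op (f x) (f y).

Section Prod.
Variables S T : finSemigroup.
Definition prod_op (p q : (S * T)%type) : (S * T)%type :=
  (sg_op p.1 q.1, sg_op p.2 q.2).
Lemma prod_op_assoc : associative prod_op.
Proof. by move=> [a b] [c d] [e f]; rewrite /prod_op /= !sg_assoc. Qed.
Lemma prod_nonempty : 0 < #|{: (S * T)%type}|.
Proof. by rewrite card_prod muln_gt0 !sg_nonempty. Qed.
Definition prod_sg : finSemigroup :=
  @FinSemigroup (S * T)%type prod_op prod_op_assoc prod_nonempty.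
End Prod.

(** Closure under finite direct products =
    contains the trivial semigroup (empty product) and binary products;
    closure under subsemigroups is rendered as closure under injective
    homomorphisms (subsemigroups up to isomorphism), closure under
    homomorphic images as closure under surjective homomorphisms. *)
Definition pseudovariety (V : finSemigroup -> Prop) : Prop :=
  [/\ (forall S : finSemigroup, #|S| = 1 -> V S),
      (forall S T : finSemigroup, V S -> V T -> V (prod_sg S T)),
      (forall (S T : finSemigroup) (f : T -> S),
          is_hom f -> injective f -> V S -> V T)
    & (forall (S T : finSemigroup) (f : S -> T),
          is_hom f -> (forall y : T, exists x : S, f x = y) -> V S -> V T)].

Definition subclass (V W : finSemigroup -> Prop) : Prop :=
  forall S, V S -> W S.

Definition gen_pv (S : finSemigroup) : finSemigroup -> Prop :=
  fun U => forall W, pseudovariety W -> W S -> W U.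

Definition join_pv (X : (finSemigroup -> Prop) -> Prop) : finSemigroup -> Prop :=
  fun U => forall W, pseudovariety W -> (forall V, X V -> subclass V W) -> W U.

Definition join_irreducible (V : finSemigroup -> Prop) : Prop :=
  forall X : (finSemigroup -> Prop) -> Prop,
    (forall W, X W -> pseudovariety W) ->
    subclass V (join_pv X) -> exists W, X W /\ subclass V W.

(** * The semigroup O_k = < x, e | x^k = x^(k-1) e = 0, e x = x, e^2 = e >.
    Normal forms: 0 (None), and x^i e^b (Some (i, b)), i < k, b : bool,
    excluding the empty word (i = 0, b = false) and x^(k-1) e (which is 0).
    Since e x = x, the product (x^i e^a)(x^j e^b) equals x^(i+j) e^b
    (if j = 0 then b = true and e e = e), which is 0 when i + j >= k or
    (i + j = k - 1 and b). *)
Section Ok.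
Variable k : nat.

Definition Ok_valid (p : option ('I_k * bool)) : bool :=
  match p with
  | None => true
  | Some (i, b) => ((i != 0 :> nat) || b) && ~~ ((i == k.-1 :> nat) && b)
  end.

Definition Ok_mulO (p q : option ('I_k * bool)) : option ('I_k * bool) :=
  match p, q with
  | Some (i, _), Some (j, b) =>
      if (i + j == k.-1) && b then None
      else omap (fun l : 'I_k => (l, b)) (insub (i + j))
  | _, _ => None
  end.

Lemma Ok_mulO_valid p q : Ok_valid q -> Ok_valid (Ok_mulO p q).
Proof.
case: p => [[i a]|] //; case: q => [[j b]|] //= Hq.
case: ifP => // Hb; case: insubP => [l Hl Hv|] //=.
rewrite Hv Hb /= andbT; case: b Hq {Hb} => /=; rewrite ?orbT // orbF.
by move=> /andP[Hj _]; rewrite addn_eq0 negb_and Hj orbT.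
Qed.

Definition Ok_car := {p : option ('I_k * bool) | Ok_valid p}.

Definition Ok_mul (p q : Ok_car) : Ok_car :=
  exist _ (Ok_mulO (val p) (val q)) (Ok_mulO_valid (val p) (valP q)).

Definition Ok_enc (p : option ('I_k * bool)) : option (nat * bool) :=
  omap (fun q : 'I_k * bool => (val q.1, q.2)) p.

Lemma Ok_enc_inj : injective Ok_enc.
Proof.
move=> [[i a]|] [[j b]|] //= [] E ->.
by rewrite (val_inj E).
Qed.

Definition Ok_F (n : nat) (b : bool) : option (nat * bool) :=
  if (k <= n) || ((n == k.-1) && b) then None else Some (n, b).

Arguments Ok_F : simpl never.

Lemma Ok_enc_mul i a j b :
  Ok_enc (Ok_mulO (Some (i, a)) (Some (j, b))) = Ok_F (i + j) b.
Proof.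
rewrite /Ok_F /=; case: ifP => H; first by rewrite orbT.
rewrite orbF; case: insubP => [u Hu Hv|Hn] /=.
  by rewrite Hv leqNgt Hu.
by rewrite leqNgt Hn.
Qed.

Lemma Ok_mulO_assoc p q r : Ok_valid q -> Ok_valid r ->
  Ok_mulO p (Ok_mulO q r) = Ok_mulO (Ok_mulO p q) r.
Proof.
case: p => [[i a]|]; last by case: q => [[]|] //; case: r.
case: q => [[j b]|]; last by case: r.
case: r => [[l c]|]; last first.
  by move=> _ _; case: (Ok_mulO (Some (i, a)) (Some (j, b))) => [[]|].
rewrite /Ok_valid => /andP[Hj _] /andP[Hl _].
have EA := Ok_enc_mul i a j b; have EB := Ok_enc_mul j b l c.
case: (Ok_mulO (Some (i, a)) (Some (j, b))) EA => [[w b']|] EA;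
case: (Ok_mulO (Some (j, b)) (Some (l, c))) EB => [[u c']|] EB;
apply: Ok_enc_inj; rewrite ?Ok_enc_mul /=; rewrite /= in EA EB;
move: EA EB; rewrite /Ok_F;
repeat (case: ifP => //);
intros; repeat match goal with H : Some _ = Some _ |- _ =>
  injection H as ? ?; subst end; try discriminate;
try (f_equal; f_equal); lia.
Qed.
Lemma Ok_mul_assoc : associative Ok_mul.
Proof.
move=> p q r; apply: val_inj => /=.
exact: Ok_mulO_assoc (valP q) (valP r).
Qed.

Definition Ok_zero : Ok_car := exist _ None isT.

Lemma Ok_nonempty : 0 < #|{: Ok_car}|.
Proof. by apply/card_gt0P; exists Ok_zero. Qed.

Definition O_sg : finSemigroup :=
  @FinSemigroup Ok_car Ok_mul Ok_mul_assoc Ok_nonempty.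

End Ok.

(* Main.v *)
Require Import Defs.
From mathcomp Require Import all_boot.
From mathcomp Require Import zify.
Set Implicit Arguments. Unset Strict Implicit. Unset Printing Implicit Defensive.

Definition Comm (S : finSemigroup) : Prop := forall x y : S, sg_op x y = sg_op y x.
Definition Band (S : finSemigroup) : Prop := forall x : S, sg_op x x = x.

Lemma card1_eq (S : finSemigroup) : #|S| = 1 -> forall x y : S, x = y.
Proof.
move=> H x y; have /fintype_le1P := (eq_leq H); by move=> /(_ x y).
Qed.

Lemma Comm_pv : pseudovariety Comm.
Proof.
split.
- by move=> S H x y; apply: card1_eq.
- move=> S T HS HT [a b] [c d]; rewrite /= /prod_op /=.
  by rewrite HS HT.
- move=> S T f hf inj HS x y; apply: inj; by rewrite !hf HS.
- move=> S T f hf sur HS x y.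
  have [a <-] := sur x; have [b <-] := sur y; by rewrite -!hf HS.
Qed.

Lemma Band_pv : pseudovariety Band.
Proof.
split.
- by move=> S H x; apply: card1_eq.
- move=> S T HS HT [a b]; rewrite /= /prod_op /=.
  by rewrite HS HT.
- move=> S T f hf inj HS x; apply: inj; by rewrite !hf HS.
- move=> S T f hf sur HS x.
  have [a <-] := sur x; by rewrite -!hf HS.
Qed.

Lemma join_pv_pv X : pseudovariety (join_pv X).
Proof.
split.
- move=> S H W [h1 _ _ _] _; exact: h1.
- move=> S T HS HT W hW hX; case: (hW) => _ h2 _ _; apply: h2; [exact: HS | exact: HT].
- move=> S T f hf inj HS W hW hX; case: (hW) => _ _ h3 _; apply: h3 hf inj _; exact: HS.
- move=> S T f hf sur HS W hW hX; case: (hW) => _ _ _ h4; apply: h4 hf sur _; exact: HS.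
Qed.

Section Build.
Variable k : nat.

Definition Nop (i j : 'I_k.+1) : 'I_k.+1 := inord (minn (i + j) k).
Lemma Nop_assoc : associative Nop.
Proof.
move=> a b c; apply: val_inj; rewrite /Nop /=.
rewrite !inordK; try (apply: leq_ltn_trans (geq_minr _ _) _; done).
lia.
Qed.
Lemma N_ne : 0 < #|{: 'I_k.+1}|.
Proof. by rewrite card_ord. Qed.
Definition Nsg : finSemigroup := @FinSemigroup 'I_k.+1 Nop Nop_assoc N_ne.

Definition Rop (a b : bool) : bool := b.
Lemma Rop_assoc : associative Rop. Proof. by []. Qed.
Lemma R_ne : 0 < #|{: bool}|. Proof. by rewrite card_bool. Qed.
Definition Rsg : finSemigroup := @FinSemigroup bool Rop Rop_assoc R_ne.

Lemma Nsg_comm : Comm Nsg.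
Proof. by move=> x y; rewrite /= /Nop addnC. Qed.
Lemma Rsg_band : Band Rsg.
Proof. by []. Qed.

Definition Tpred (p : 'I_k.+1 * bool) : bool := (val p.1 != 0) || p.2.
Definition Tcar := {p : 'I_k.+1 * bool | Tpred p}.

Lemma Tmul_ok (p q : Tcar) : Tpred (prod_op (S:=Nsg) (T:=Rsg) (val p) (val q)).
Proof.
case: p => [[i a] /= Hp]; case: q => [[j b] /= Hq].
rewrite /Tpred /prod_op /= /Nop /Rop inordK; last by apply: leq_ltn_trans (geq_minr _ _) _.
move: Hp Hq; rewrite /Tpred /=; case: b; rewrite ?orbT // !orbF; have := ltn_ord j; lia.
Qed.

Definition Tmul (p q : Tcar) : Tcar := exist (fun r => Tpred r) _ (Tmul_ok p q).
Lemma Tmul_assoc : associative Tmul.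
Proof. move=> p q r; apply: val_inj; rewrite /=; exact: (@prod_op_assoc (Nsg) (Rsg)). Qed.
Lemma T_ne : 0 < #|{: Tcar}|.
Proof. apply/card_gt0P; by exists (exist (fun r => Tpred r) (ord0, true) isT). Qed.
Definition Tsg : finSemigroup := @FinSemigroup Tcar Tmul Tmul_assoc T_ne.

Definition Tinc (p : Tsg) : prod_sg Nsg Rsg := val p.
Lemma Tinc_hom : is_hom Tinc. Proof. by []. Qed.
Lemma Tinc_inj : injective Tinc. Proof. exact: val_inj. Qed.

Definition gO (n : nat) (b : bool) : option ('I_k * bool) :=
  if (n == k.-1) && b then None else omap (fun l : 'I_k => (l, b)) (insub n).

Lemma gO_enc n b : Ok_enc (gO n b) = Ok_F k n b.
Proof.
rewrite /Ok_F /gO; case: ifP => H; first by rewrite orbT.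
rewrite orbF; case: insubP => [u Hu Hv|Hn] /=.
  by rewrite Hv leqNgt Hu.
by rewrite leqNgt Hn.
Qed.


Lemma gO_valid n b : (n != 0) || b -> Ok_valid (gO n b).
Proof.
rewrite /gO => H; case: ifP => // Hb; case: insubP => [l Hl Hv|] //=.
by rewrite Hv Hb andbT.
Qed.

Definition gmap (p : Tsg) : O_sg k :=
  exist _ (gO (val (val p).1) (val p).2) (gO_valid (valP p)).

Lemma gmap_hom : is_hom gmap.
Proof.
move=> [[i a] Hp] [[j b] Hq]; apply: val_inj; rewrite /= /Nop /Rop.
move: Hp Hq; rewrite /Tpred /= => Hp Hq.
apply: Ok_enc_inj; rewrite gO_enc inordK; last by apply: leq_ltn_trans (geq_minr _ _) _.
have EA := gO_enc i a; have EB := gO_enc j b.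
have Hi := ltn_ord i; have Hj := ltn_ord j.
case: (gO i a) EA => [[w a']|] EA;
case: (gO j b) EB => [[u b']|] EB; rewrite ?Ok_enc_mul /=;
move: EA EB; rewrite /Ok_F /Ok_enc /=;
repeat (case: ifP => //);
intros; repeat match goal with H : Some _ = Some _ |- _ =>
  injection H as ? ?; subst end; try discriminate;
try (f_equal; f_equal); lia.
Qed.

End Build.

Lemma gmap_sur (k : nat) : 2 <= k -> forall y : O_sg k, exists x : Tsg k, gmap x = y.
Proof.
move=> hk [[[i b]|] Hv].
- have Hp : Tpred (widen_ord (leqnSn k) i, b).
    move: Hv; rewrite /Tpred /=; case/andP=> ->; done.
  exists (exist (fun r => Tpred r) _ Hp); apply: val_inj; rewrite /=.
  apply: Ok_enc_inj; rewrite gO_enc /Ok_F /=.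
  move: Hv => /= /andP[_ H2]; have Hi := ltn_ord i.
  rewrite (negbTE H2) orbF leqNgt Hi //.
- have Hp : Tpred (k := k) (ord_max, true) by rewrite /Tpred orbT.
  exists (exist (fun r => Tpred r) _ Hp); apply: val_inj; rewrite /=.
  apply: Ok_enc_inj; rewrite gO_enc /Ok_F /= leqnn //.
Qed.

Theorem proposition4p15 (k : nat) (hk : 2 <= k) :
  ~ join_irreducible (gen_pv (O_sg k)).
Proof.
move=> JI.
pose X := fun W => W = Comm \/ W = Band.
have hX : forall W, X W -> pseudovariety W.
  by move=> W [->|->]; [exact: Comm_pv | exact: Band_pv].
have inJ : join_pv X (O_sg k).
  move=> W hW hXW.
  have hN : W (Nsg k) by apply: (hXW Comm); [left | exact: Nsg_comm].
  have hR : W Rsg by apply: (hXW Band); [right | exact: Rsg_band].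
  case: (hW) => _ h2 h3 h4.
  have hP := h2 _ _ hN hR.
  have hT : W (Tsg k) := h3 _ _ _ (@Tinc_hom k) (@Tinc_inj k) hP.
  exact: h4 _ _ _ (@gmap_hom k) (gmap_sur hk) hT.
have sub : subclass (gen_pv (O_sg k)) (join_pv X).
  move=> U HU; exact: HU (join_pv_pv X) inJ.
have [W [HW HWs]] := JI X hX sub.
have HO : W (O_sg k) by apply: HWs => W' _ h.
case: k hk inJ sub HW HWs HO JI => [|[|k]] // _ _ _ HW _ HO _.
have vx : Ok_valid (Some (Ordinal (isT : 1 < k.+2), false)) by rewrite /= andbF.
have ve : Ok_valid (Some (@ord0 k.+1, true)) by [].
pose x : O_sg k.+2 := exist (fun p => Ok_valid p) _ vx.
pose e : O_sg k.+2 := exist (fun p => Ok_valid p) _ ve.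
case: HW => -> in HO.
- have := congr1 (fun z => Ok_enc (val z)) (HO x e).
  rewrite /x /e /=; clear; case: k => [|k] //=; rewrite insubT //=.
- have := congr1 (fun z => Ok_enc (val z)) (HO x).
  rewrite Ok_enc_mul /Ok_F /=; case: k {vx x e HO ve} => [|k] //=; rewrite andbF; case; lia.
Qed.
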